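(* Let $\phi$ be a 3SAT instance on variables $s_1,\dots,s_n$ with clauses $C_1,\dots,C_m$, each clause being a disjunction of exactly three literals. Let $\mathcal{G}=\mathcal{G}(\phi)$ be the edge-weighted graph defined in the context. Then $\phi$ is satisfiable if and only if $\mathcal{G}$ has a realization in $\mathbb{R}$, i.e. a map $x:V(\mathcal{G})\to\mathbb{R}$ with $|x_u-x_v|=d_{uv}$ for every edge $\{u,v\}$.
   Context: The graph $\mathcal{G}(\phi)$ has vertex set consisting of: two vertices $\mathsf{A},\mathsf{B}$; for each variable $s_j$ ($j\le n$) two literal vertices, denoted $s_j$ and $\bar s_j$; and for each clause $i\le m$ eight new vertices $c_{i1},\dots,c_{i8}$. For clause $i$ and $h\in\{1,2,3\}$, let $\mathsf{L}_{ih}$ denote the literal vertex ($s_j$ or $\bar s_j$) of the $h$-th literal of clause $i$. Edges with weights: $\{\mathsf{A},\mathsf{B}\}$ weight 2; for each $j\le n$: $\{s_j,\bar s_j\}$ weight 2, $\{\mathsf{A},s_j\}$ weight 1, $\{\mathsf{A},\bar s_j\}$ weight 1. For each clause $i\le m$: $\{\mathsf{A},c_{i2}\}$ weight 4, $\{\mathsf{A},c_{i7}\}$ weight 2, $\{\mathsf{L}_{i1},c_{i2}\}$ weight 3, $\{\mathsf{L}_{i2},c_{i7}\}$ weight 1, $\{c_{i2},c_{i4}\}$ weight 2, $\{c_{i7},c_{i3}\}$ weight 4, $\{\mathsf{B},c_{i1}\}$ weight 4, $\{c_{i1},c_{i5}\}$ weight 2, $\{c_{i5},c_{i6}\}$ weight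 1, $\{c_{i3},c_{i6}\}$ weight 1, $\{c_{i4},c_{i6}\}$ weight 1, $\{\mathsf{L}_{i3},c_{i8}\}$ weight 4, $\{c_{i6},c_{i8}\}$ weight 2 (edges $\{\mathsf{A},\mathsf{L}_{ih}\}$ of weight 1 are already present). A truth assignment corresponds to positions via: $x_\mathsf{A}=0$, $x_\mathsf{B}=2$, and literal vertex at $1$ means TRUE, at $-1$ means FALSE. *)

(* Defs.v *)
From mathcomp Require Import all_boot.
From Stdlib Require Import Reals.
Set Implicit Arguments. Unset Strict Implicit. Unset Printing Implicit Defensive.

Open Scope R_scope.

(* A literal over variables s_0..s_{n-1}: (j, true) is s_j, (j, false) is ~s_j. *)
Definition lit (n : nat) : Type := ('I_n * bool)%type.

Definition cnf3 (n m : nat) : Type := 'I_m -> 'I_3 -> lit n.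

Definition lit_true n (a : 'I_n -> bool) (l : lit n) : bool := a l.1 == l.2.

Definition satisfiable n m (phi : cnf3 n m) : Prop :=
  exists a : 'I_n -> bool, forall i : 'I_m, exists h : 'I_3, lit_true a (phi i h).

(* Vertices of G(phi): A, B, literal vertices (Lv j true = s_j, Lv j false = bar s_j),
   clause vertices Cv i k = c_{i,k+1} for k : 'I_8. *)
Inductive vtx (n m : nat) : Type :=
| vA : vtx n m
| vB : vtx n m
| Lv : 'I_n -> bool -> vtx n m
| Cv : 'I_m -> 'I_8 -> vtx n m.
Arguments vA {n m}. Arguments vB {n m}.

Definition litv n m (l : lit n) : vtx n m := Lv m l.1 l.2.

Definition cv n m (i : 'I_m) (k : nat) : vtx n m := Cv n i (inord k.-1).

Inductive edge n m (phi : cnf3 n m) : vtx n m -> vtx n m -> R -> Prop :=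
| e_AB : edge phi vA vB 2
| e_lit (j : 'I_n) : edge phi (Lv m j true) (Lv m j false) 2
| e_Alit (j : 'I_n) (b : bool) : edge phi vA (Lv m j b) 1
| e_A_c2 (i : 'I_m) : edge phi vA (cv n i 2) 4
| e_A_c7 (i : 'I_m) : edge phi vA (cv n i 7) 2
| e_L1_c2 (i : 'I_m) : edge phi (litv m (phi i (@inord 2 0))) (cv n i 2) 3
| e_L2_c7 (i : 'I_m) : edge phi (litv m (phi i (@inord 2 1))) (cv n i 7) 1
| e_c2_c4 (i : 'I_m) : edge phi (cv n i 2) (cv n i 4) 2
| e_c7_c3 (i : 'I_m) : edge phi (cv n i 7) (cv n i 3) 4
| e_B_c1 (i : 'I_m) : edge phi vB (cv n i 1) 4
| e_c1_c5 (i : 'I_m) : edge phi (cv n i 1) (cv n i 5) 2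
| e_c5_c6 (i : 'I_m) : edge phi (cv n i 5) (cv n i 6) 1
| e_c3_c6 (i : 'I_m) : edge phi (cv n i 3) (cv n i 6) 1
| e_c4_c6 (i : 'I_m) : edge phi (cv n i 4) (cv n i 6) 1
| e_L3_c8 (i : 'I_m) : edge phi (litv m (phi i (@inord 2 2))) (cv n i 8) 4
| e_c6_c8 (i : 'I_m) : edge phi (cv n i 6) (cv n i 8) 2.

Definition realization n m (phi : cnf3 n m) (x : vtx n m -> R) : Prop :=
  forall u v d, edge phi u v d -> Rabs (x u - x v) = d.

Definition realizable n m (phi : cnf3 n m) : Prop :=
  exists x : vtx n m -> R, realization phi x.

(* Main.v *)
Require Import Defs.
From mathcomp Require Import all_boot.
From Stdlib Require Import Reals Lra.

Open Scope R_scope.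

Definition cpos (t1 t2 t3 : bool) (k : nat) : R :=
  nth 0 (match t1, t2, t3 with
  | true, true, true => [:: 6; 4; 6; 6; 8; 7; 2; 5]
  | true, true, false => [:: 6; 4; 6; 6; 4; 5; 2; 3]
  | true, false, true => [:: 6; 4; 2; 2; 4; 3; -2; 5]
  | true, false, false => [:: -2; 4; 2; 2; 0; 1; -2; 3]
  | false, true, true => [:: -2; -4; -2; -2; 0; -1; 2; -3]
  | false, true, false => [:: -2; -4; -2; -2; -4; -3; 2; -5]
  | false, false, _ => [:: -2; -4; -6; -6; -4; -5; -2; -3]
  end) k.

Ltac rabs := unfold Rabs; destruct (Rcase_abs _); lra.

Lemma clause_ok t1 t2 t3 : [|| t1, t2 | t3] ->
  let c k := cpos t1 t2 t3 k in let L (b:bool) : R := if b then 1 else -1 in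
  Rabs (0 - c 1%nat) = 4 /\ Rabs (0 - c 6%nat) = 2 /\ Rabs (L t1 - c 1%nat) = 3 /\
  Rabs (L t2 - c 6%nat) = 1 /\ Rabs (c 1%nat - c 3%nat) = 2 /\ Rabs (c 6%nat - c 2%nat) = 4 /\
  Rabs (2 - c 0%nat) = 4 /\ Rabs (c 0%nat - c 4%nat) = 2 /\ Rabs (c 4%nat - c 5%nat) = 1 /\
  Rabs (c 2%nat - c 5%nat) = 1 /\ Rabs (c 3%nat - c 5%nat) = 1 /\
  Rabs (L t3 - c 7%nat) = 4 /\ Rabs (c 5%nat - c 7%nat) = 2.
Proof.
case: t1; case: t2; case: t3 => //= _; rewrite /cpos /=;
repeat split; rabs.
Qed.

Lemma Rabs_cases z d : Rabs z = d -> z = d \/ z = - d.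
Proof. unfold Rabs; destruct (Rcase_abs z); lra. Qed.

Lemma no_fff c1 c2 c3 c4 c5 c6 c7 c8 :
  Rabs (0 - c2) = 4 -> Rabs (0 - c7) = 2 -> Rabs (-1 - c2) = 3 ->
  Rabs (-1 - c7) = 1 -> Rabs (c2 - c4) = 2 -> Rabs (c7 - c3) = 4 ->
  Rabs (2 - c1) = 4 -> Rabs (c1 - c5) = 2 -> Rabs (c5 - c6) = 1 ->
  Rabs (c3 - c6) = 1 -> Rabs (c4 - c6) = 1 -> Rabs (-1 - c8) = 4 ->
  Rabs (c6 - c8) = 2 -> False.
Proof.
move=> /Rabs_cases H1 /Rabs_cases H2 /Rabs_cases H3 /Rabs_cases H4 /Rabs_cases H5
  /Rabs_cases H6 /Rabs_cases H7 /Rabs_cases H8 /Rabs_cases H9 /Rabs_cases H10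
  /Rabs_cases H11 /Rabs_cases H12 /Rabs_cases H13.
have E2 : c2 = -4 by lra.
have E7 : c7 = -2 by lra.
destruct H5 as [H5|H5]; destruct H6 as [H6|H6]; destruct H11 as [H11|H11]; try lra;
destruct H10 as [H10|H10]; try lra;
destruct H12 as [H12|H12]; destruct H13 as [H13|H13]; try lra;
destruct H9 as [H9|H9]; destruct H8 as [H8|H8]; destruct H7 as [H7|H7]; lra.
Qed.

Theorem theorem1 (n m : nat) (phi : cnf3 n m) :
  satisfiable phi <-> realizable phi.
Proof.
split.
{ move=> [a Ha].
  pose t i h := lit_true a (phi i (@inord 2 h)).
  exists (fun v => match v with
    | vA => 0 | vB => 2
    | Lv j b => if a j == b then 1 else -1
    | Cv i k => cpos (t i 0%nat) (t i 1%nat) (t i 2%nat) k end).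
  have Hc : forall i : 'I_m, [|| t i 0%nat, t i 1%nat | t i 2%nat].
    move=> i; case: (Ha i) => h Hh.
    have E : forall (k : nat) (hk : is_true (leq (S k) 3)), @inord 2 k = Ordinal hk.
      by move=> k hk; apply: val_inj; rewrite /= inordK.
    rewrite /t; case: h Hh => [[|[|[|k]]] hh] //= Hh //.
    + by rewrite (E 0%nat hh) Hh.
    + by rewrite (E 1%nat hh) Hh orbT.
    + by rewrite (E 2%nat hh) Hh !orbT.
  move=> u v d e; case: e; try (move=> *; rabs).
  all: try (move=> j b; case: (a j == b); rabs).
  all: try (move=> j; case: (a j) => /=; rabs).
  all: move=> i; have := @clause_ok _ _ _ (Hc i); cbv zeta;
    rewrite /cv /= ?inordK //=; rewrite /litv /= => -[H1 [H2 [H3 [H4 [H5 [H6 [H7 [H8 [H9 [H10 [H11 [H12 H13]]]]]]]]]]]];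
    assumption. }
- move=> [x Hx].
  have [y [Hy [HA HB]]] : exists y, realization phi y /\ y vA = 0 /\ y vB = 2.
    have /Rabs_cases H := Hx _ _ _ (e_AB phi).
    destruct H as [H|H].
    + exists (fun u => x vA - x u); split; [|split; lra].
      move=> u v d /Hx <-; rewrite -Rabs_Ropp; f_equal; lra.
    + exists (fun u => x u - x vA); split; [|split; lra].
      move=> u v d /Hx <-; f_equal; lra.
  have Hlit : forall j b, y (Lv m j b) = 1 \/ y (Lv m j b) = -1.
    move=> j b; have /Rabs_cases := Hy _ _ _ (e_Alit phi j b); lra.
  have Hpair : forall j, Rabs (y (Lv m j true) - y (Lv m j false)) = 2.
    move=> j; exact: Hy _ _ _ (e_lit phi j).
  pose a j := if Req_EM_T (y (Lv m j true)) 1 then true else false.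
  have Hf : forall l, ~~ lit_true a l -> y (litv m l) = -1.
    move=> [j b]; rewrite /lit_true /a /litv /=.
    have := Hlit j true; have := Hlit j false; have /Rabs_cases := Hpair j.
    destruct (Req_EM_T (y (Lv m j true)) 1); case: b => //=; lra.
  exists a => i.
  case E: [exists h, lit_true a (phi i h)]; first by move/existsP: E.
  move/negbT: E; rewrite negb_exists => /forallP Hn.
  exfalso.
  have F0 := Hf _ (Hn (@inord 2 0)).
  have F1 := Hf _ (Hn (@inord 2 1)).
  have F2 := Hf _ (Hn (@inord 2 2)).
  have G := fun u v d (e : edge phi u v d) => Hy u v d e.
  have := G _ _ _ (e_A_c2 phi i); have := G _ _ _ (e_A_c7 phi i);
  have := G _ _ _ (e_L1_c2 phi i); have := G _ _ _ (e_L2_c7 phi i);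
  have := G _ _ _ (e_c2_c4 phi i); have := G _ _ _ (e_c7_c3 phi i);
  have := G _ _ _ (e_B_c1 phi i); have := G _ _ _ (e_c1_c5 phi i);
  have := G _ _ _ (e_c5_c6 phi i); have := G _ _ _ (e_c3_c6 phi i);
  have := G _ _ _ (e_c4_c6 phi i); have := G _ _ _ (e_L3_c8 phi i);
  have := G _ _ _ (e_c6_c8 phi i).
  rewrite F0 F1 F2 HA HB => ? ? ? ? ? ? ? ? ? ? ? ? ?.
  apply: (no_fff (y (cv n i 1)) (y (cv n i 2)) (y (cv n i 3)) (y (cv n i 4))
    (y (cv n i 5)) (y (cv n i 6)) (y (cv n i 7)) (y (cv n i 8))); assumption.
Qed.
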